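(* Let $r\in\mathbb N$, let $M$ be the sub-add move matrix, and let $\Delta$ be the subgraph of $\Gamma_{M,\,2^r}$ induced on $V(\Gamma_{M,\,2^r})\setminus\{(0,0)\}$. Then $\Delta$ is an inverted $PBT_d$ of depth $d=2r-1$. Moreover, $\Gamma_{M,\,2^r}$ is obtained from $\Delta$ by adding the vertex $(0,0)$ together with the two arcs $((2^{r-1},2^{r-1}),(0,0))$ and $((0,0),(0,0))$.
   Context: The sub-add move matrix is $M=\begin{pmatrix}1&-1\\1&1\end{pmatrix}$. For $n\in\mathbb N$, $\Gamma_{M,\,n}$ is the directed graph with vertex set $\mathbb Z_n^2$ and arcs $((a,b),(a-b,a+b))$ for all $(a,b)\in\mathbb Z_n^2$ (computed mod $n$; loops allowed). A perfect binary tree $PBT_d$ is a rooted binary tree in which every non-leaf node has exactly two children and all leaves are at the same depth $d$; it is regarded as directed so that there is a unique directed path from the root (the unique parentless node) to each leaf. It is called inverted if the orientation of every arc is reversed. *)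

(* Defs.v *)
From HB Require Import structures.
From mathcomp Require Import all_boot all_order all_algebra.
Set Implicit Arguments. Unset Strict Implicit. Unset Printing Implicit Defensive.
Import GRing.Theory.
Local Open Scope ring_scope.

(* The move graph Gamma_{M,n}: vertices Z_n^2, arcs (u, M u) computed mod n.
   (Only meaningful for n >= 2, since 'Z_n is Z/max(n,2).) *)
Definition move (n : nat) (M : 'M[int]_2) (u : 'Z_n * 'Z_n) : 'Z_n * 'Z_n :=
  ((M 0 0)%:~R * u.1 + (M 0 1)%:~R * u.2,
   (M 1 0)%:~R * u.1 + (M 1 1)%:~R * u.2).

Definition Gamma_arc (n : nat) (M : 'M[int]_2) (u v : 'Z_n * 'Z_n) : bool :=
  v == move M u.

Definition subadd : 'M[int]_2 :=
  \matrix_(i < 2, j < 2) (if (i == 0) && (j == 1) then -1 else 1).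

Definition nonzero_vertex (n : nat) := {u : 'Z_n * 'Z_n | u != (0, 0)}.

Definition Delta_arc (n : nat) (M : 'M[int]_2) (x y : nonzero_vertex n) : bool :=
  Gamma_arc M (sval x) (sval y).

(* Canonical perfect binary tree PBT_d: nodes are binary words of length <= d
   (the word records the left/right choices from the root, root = [::]);
   arcs go from a node s to its two children b :: s. *)
Definition pbt_node (d : nat) := {s : seq bool | size s <= d}%N.

Definition pbt_arc (d : nat) (s t : pbt_node d) : Prop :=
  exists b : bool, sval t = b :: sval s.

Definition is_inverted_PBT (V : Type) (e : V -> V -> Prop) (d : nat) : Prop :=
  exists f : V -> pbt_node d,
    bijective f /\ forall x y : V, e x y <-> pbt_arc (f y) (f x).

(* Main.v *)
Require Import Defs.
From mathcomp Require Import all_boot all_order all_algebra.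
From mathcomp Require Import zify ring.
Set Implicit Arguments. Unset Strict Implicit. Unset Printing Implicit Defensive.
Import GRing.Theory.
Local Open Scope ring_scope.

Notation ZZ r := ('Z_(2 ^ r)).

Lemma n_gt1 r : (0 < r)%N -> (1 < 2 ^ r)%N.
Proof. by move=> hr; rewrite -{1}(expn0 2) ltn_exp2l. Qed.

Lemma n_eq r : (0 < r)%N -> (2 ^ r = 2 * 2 ^ (r - 1))%N.
Proof. by case: r => // r _; rewrite expnS subn1. Qed.

Lemma valZ r (hr : (0 < r)%N) (z : ZZ r) : (val z < 2 ^ r)%N.
Proof. by apply: leq_trans (ltn_ord z) _; rewrite Zp_cast // n_gt1. Qed.

Lemma natZ r (z : ZZ r) : z = (val z)%:R.
Proof. by rewrite natr_Zp. Qed.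

Lemma eqZ r (hr : (0 < r)%N) (a b : nat) :
  ((a%:R : ZZ r) = b%:R) <-> (a %% 2 ^ r = b %% 2 ^ r)%N.
Proof.
split=> [E|E].
  by rewrite -!(val_Zp_nat (n_gt1 hr)) E.
by rewrite -(Zp_nat_mod (n_gt1 hr)) E Zp_nat_mod // n_gt1.
Qed.

Lemma eqZ0 r (hr : (0 < r)%N) (a : nat) :
  ((a%:R : ZZ r) = 0) <-> (a %% 2 ^ r = 0)%N.
Proof. by have := @eqZ r hr a 0; rewrite mod0n. Qed.

Definition H r : ZZ r := (2 ^ (r - 1))%:R.

Lemma valH r (hr : (0 < r)%N) : val (H r) = (2 ^ (r - 1))%N.
Proof.
rewrite /H /= val_Zp_nat ?n_gt1 // modn_small // (n_eq hr).
have : (0 < 2 ^ (r - 1))%N by rewrite expn_gt0.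
lia.
Qed.

Lemma Z1 r (hr : (0 < r)%N) (z : ZZ r) : z + z = 0 -> z = 0 \/ z = H r.
Proof.
move=> E.
have Hv := valZ hr z; have hn := n_eq hr.
have hp : (0 < 2 ^ (r - 1))%N by rewrite expn_gt0.
rewrite (natZ z) -natrD in E.
move/(eqZ0 hr): E => E.
move: E Hv; case: z => v hv0 /= E Hv.
have [E1|E1] : (v + v = 0 \/ v + v = 2 ^ r)%N.
  have : (v + v < 2 * 2 ^ r)%N by lia.
  move: E; rewrite hn; set h := (2 ^ (r-1))%N => E.
  have := divn_eq (v+v) (2 * h). rewrite E addn0.
  have : ((v + v) %/ (2 * h) < 2)%N.
    by rewrite ltn_divLR; lia.
  case: ((v + v) %/ (2 * h))%N => [|[|]] //; lia.
- by left; apply/val_inj => /=; lia.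
- right; apply/val_inj; rewrite valH //=; lia.
Qed.

Lemma HH r (hr : (0 < r)%N) : H r + H r = 0.
Proof.
rewrite /H -natrD; apply/eqZ0 => //.
have -> : (2 ^ (r - 1) + 2 ^ (r - 1) = 2 ^ r)%N by rewrite (n_eq hr); lia.
by rewrite modnn.
Qed.

Lemma Hneq0 r (hr : (0 < r)%N) : H r != 0.
Proof. apply/eqP => /(congr1 val); rewrite valH //= => E; have := expn_gt0 2 (r-1); lia. Qed.

Lemma n0 r (hr : (0 < r)%N) : (2 ^ r)%:R = 0 :> ZZ r.
Proof. by rewrite pchar_Zp // n_gt1. Qed.

Lemma Z4 r (hr : (0 < r)%N) (z : ZZ r) : H r * z = 0 -> exists a, z = a + a.
Proof.
rewrite /H (natZ z); case: z => v hv0 /=; rewrite -natrM => /(eqZ0 hr).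
move/eqP; rewrite -/(dvdn _ _) (n_eq hr) mulnC dvdn_pmul2l ?expn_gt0 //.
case/dvdnP => q ->; exists q%:R; by rewrite -natrD; congr (_%:R); lia.
Qed.

Definition cZ r (z : ZZ r) : bool := (2 ^ (r - 1) <= val z)%N.

Lemma Z5 r (hr : (0 < r)%N) (z : ZZ r) : cZ (z + H r) = ~~ cZ z.
Proof.
have := valZ hr z.
case: z => v hv0; set z := Ordinal hv0 => /= lt.
have -> : cZ z = (2 ^ (r - 1) <= v)%N by [].
have -> : z = v%:R by rewrite [LHS]natZ.
rewrite /cZ /H -natrD.
have -> : val ((v + 2 ^ (r - 1))%:R : ZZ r) = ((v + 2 ^ (r - 1)) %% 2 ^ r)%N.
  by apply: val_Zp_nat; apply: n_gt1.
move: lt; rewrite (n_eq hr); set h := (2 ^ (r-1))%N.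
have hp : (0 < h)%N by rewrite expn_gt0.
move=> lt.
case: (leqP h v) => hv /=.
  have -> : (v + h = (v - h) + 2 * h)%N by lia.
  rewrite modnDr modn_small; lia.
rewrite modn_small; lia.
Qed.

Definition g r (u : ZZ r * ZZ r) : ZZ r * ZZ r := (u.1 - u.2, u.1 + u.2).

Lemma moveE r (u : ZZ r * ZZ r) : move subadd u = g u.
Proof.
rewrite /move /subadd /g !mxE /=.
by rewrite !mul1r mulN1r.
Qed.

Definition root r : ZZ r * ZZ r := (H r, H r).

Lemma g0 r : g (0 : ZZ r * ZZ r) = 0.
Proof. by rewrite /g /= subrr addr0. Qed.

Lemma groot r (hr : (0 < r)%N) : g (root r) = 0.
Proof. by rewrite /g /root /= subrr HH. Qed.

Lemma rootN0 r (hr : (0 < r)%N) : root r != 0.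
Proof. by apply/negP => /eqP [] /eqP; rewrite (negbTE (Hneq0 hr)). Qed.

Lemma gzero r (hr : (0 < r)%N) (u : ZZ r * ZZ r) :
  g u = 0 -> u = 0 \/ u = root r.
Proof.
case: u => a b E.
have /= /eqP := congr1 fst E; rewrite subr_eq0 => /eqP Eab.
have /= := congr1 snd E; rewrite Eab => E2.
by case: (Z1 hr E2) => ->; [left|right].
Qed.

Definition even r (z : ZZ r) := exists a, z = a + a.

Lemma evenN r (z : ZZ r) : even (- z) <-> even z.
Proof.
split=> [[a E]|[a E]]; exists (- a).
  by rewrite -[z]opprK E opprD.
by rewrite E opprD.
Qed.

Lemma iter2k r (k : nat) (u : ZZ r * ZZ r) :
  exists c d, iter (2 * k) (@g r) u = ((2 ^ k)%:R * c, (2 ^ k)%:R * d) /\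
   ((even u.1 <-> even u.2) -> (even c <-> even d) /\ (even d <-> even u.2)).
Proof.
elim: k => [|k [c [d [E I]]]].
  exists u.1, u.2; rewrite muln0 /= !mul1r; split; first by case: u.
  by move=> h; split.
exists (- d), c; split.
  rewrite mulnS addSn add1n /= E /g /= expnS natrM.
  congr (_, _); ring.
move=> /I [I1 I2]; split.
  by rewrite evenN; split => h; apply/I1.
by split=> h; [apply/I2/I1 | apply/I1/I2].
Qed.

Lemma iter_zero r (hr : (0 < r)%N) (u : ZZ r * ZZ r) : iter (2 * r) (@g r) u = 0.
Proof.
have [c [d [E _]]] := iter2k r u.
by rewrite E n0 // !mul0r.
Qed.

Lemma F3 r (hr : (0 < r)%N) (y : ZZ r * ZZ r) :
  iter (2 * r - 1) (@g r) y = 0 -> even (y.1 + y.2).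
Proof.
have -> : (2 * r - 1 = (2 * (r - 1)).+1)%N by lia.
rewrite iterSr.
have [c [d [E I]]] := iter2k (r - 1) (g y).
rewrite E => E0.
have /= Ed := congr1 snd E0.
have [] := I.
  rewrite /g /=; split=> -[a Ea].
    exists (a + y.2).
    rewrite (_ : y.1 + y.2 = (y.1 - y.2) + (y.2 + y.2)); last by ring.
    rewrite Ea; ring.
  exists (a - y.2).
  rewrite (_ : y.1 - y.2 = (y.1 + y.2) - (y.2 + y.2)); last by ring.
  rewrite Ea; ring.
move=> _ [+ _] => /(_ (Z4 hr Ed)).
by rewrite /g.
Qed.

Lemma exdep r (hr : (0 < r)%N) (u : ZZ r * ZZ r) :
  exists k, iter k.+1 (@g r) u == 0.
Proof.
exists (2 * r - 1)%N; have -> : (2 * r - 1).+1 = (2 * r)%N by lia.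
by rewrite iter_zero.
Qed.

Definition depth r (hr : (0 < r)%N) (u : ZZ r * ZZ r) : nat := ex_minn (exdep hr u).

Lemma D1 r (hr : (0 < r)%N) u : iter (depth hr u).+1 (@g r) u = 0.
Proof. by rewrite /depth; case: ex_minnP => m /eqP. Qed.

Lemma Dmin r (hr : (0 < r)%N) u k : iter k.+1 (@g r) u = 0 -> (depth hr u <= k)%N.
Proof. by rewrite /depth; case: ex_minnP => m _ Hm /eqP /Hm. Qed.

Lemma iter_stay r (u : ZZ r * ZZ r) a b :
  iter a (@g r) u = 0 -> iter (b + a) (@g r) u = 0.
Proof. by move=> E; elim: b => [|b IH] //=; rewrite IH g0. Qed.

Lemma D3 r (hr : (0 < r)%N) u : (depth hr u <= 2 * r - 1)%N.
Proof.
apply: Dmin; have -> : (2 * r - 1).+1 = (2 * r)%N by lia.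
by rewrite iter_zero.
Qed.

Lemma D4 r (hr : (0 < r)%N) u : u != 0 -> iter (depth hr u) (@g r) u = root r.
Proof.
move=> u0.
have N : iter (depth hr u) (@g r) u != 0.
  case E: (depth hr u) => [|k] //.
  apply/eqP => /(Dmin hr); lia.
have := D1 hr u; rewrite /= => /(gzero hr) [] //.
by move=> E; rewrite E eqxx in N.
Qed.

Lemma D5 r (hr : (0 < r)%N) u : depth hr u = 0%N -> u != 0 -> u = root r.
Proof. by move=> E /(D4 hr); rewrite E. Qed.

Lemma D5' r (hr : (0 < r)%N) : depth hr (root r) = 0%N.
Proof. by apply/eqP; rewrite -leqn0; apply: Dmin; rewrite /= groot. Qed.

Lemma D6 r (hr : (0 < r)%N) u : g u != 0 -> depth hr u = (depth hr (g u)).+1.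
Proof.
move=> gu0; case E: (depth hr u) => [|k].
  by have := D1 hr u; rewrite E /= => gu; rewrite gu eqxx in gu0.
congr S; apply/eqP; rewrite eqn_leq; apply/andP; split.
  have := Dmin hr (u := u) (k := (depth hr (g u)).+1).
  rewrite E ltnS; apply; by rewrite iterSr D1.
by apply: Dmin; rewrite -iterSr -E D1.
Qed.

Definition f r (hr : (0 < r)%N) (u : ZZ r * ZZ r) : seq bool :=
  [seq cZ (iter i (@g r) u).1 | i <- iota 0 (depth hr u)].

Lemma size_f r (hr : (0 < r)%N) u : size (f hr u) = depth hr u.
Proof. by rewrite size_map size_iota. Qed.

Lemma fS r (hr : (0 < r)%N) u : g u != 0 -> f hr u = cZ u.1 :: f hr (g u).
Proof.
move=> gu0; rewrite /f (D6 hr gu0) /=.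
have -> : iota 1 (depth hr (g u)) = [seq (1 + i)%N | i <- iota 0 (depth hr (g u))].
  by rewrite -iotaDl.
rewrite -map_comp.
congr (_ :: _); apply: eq_map => i; by rewrite /comp add1n iterSr.
Qed.

Lemma f_root r (hr : (0 < r)%N) : f hr (root r) = [::].
Proof. by rewrite /f D5'. Qed.

Lemma F4 r (hr : (0 < r)%N) (u v : ZZ r * ZZ r) :
  g u = g v -> cZ u.1 = cZ v.1 -> u = v.
Proof.
case: u v => [a b] [a' b'] E Ec.
have /= E1 := congr1 fst E; have /= E2 := congr1 snd E.
have : (a - a') + (a - a') = 0.
  rewrite (_ : (a - a') + (a - a') = (a - b + (a + b)) - (a' - b' + (a' + b'))); last by ring.
  by rewrite E1 E2 subrr.
case/(Z1 hr) => /eqP.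
  rewrite subr_eq0 => /eqP Ea; move: E2; rewrite Ea => /addrI ->; by [].

rewrite subr_eq => /eqP Ea; move: Ec; rewrite /= Ea addrC Z5 //.
by case: (cZ a').
Qed.

Lemma f_inj r (hr : (0 < r)%N) k (u v : ZZ r * ZZ r) :
  depth hr u = k -> u != 0 -> v != 0 -> f hr u = f hr v -> u = v.
Proof.
elim: k u v => [|k IH] u v Du u0 v0 Ef.
  have Dv : depth hr v = 0%N by rewrite -size_f -Ef size_f.
  by rewrite (D5 Du u0) (D5 Dv v0).
have Dv : depth hr v = k.+1 by rewrite -size_f -Ef size_f.
have gN w : w != 0 -> depth hr w = k.+1 -> g w != 0.
  move=> w0 Dw; apply/eqP => /(gzero hr) [] wE; first by rewrite wE eqxx in w0.
  by move: Dw; rewrite wE D5'.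
have gu0 := gN u u0 Du; have gv0 := gN v v0 Dv.
move: Ef; rewrite (fS hr gu0) (fS hr gv0) => -[Ec Ef].
apply: (F4 hr) Ec; apply: (IH _ _ _ gu0 gv0 Ef).
by move: Du; rewrite (D6 hr gu0) => -[].
Qed.

Lemma f_surj r (hr : (0 < r)%N) (w : seq bool) :
  (size w <= 2 * r - 1)%N -> exists u, u != 0 /\ f hr u = w.
Proof.
elim: w => [|b w IH] /= Hs.
  by exists (root r); split; [apply: rootN0 | apply: f_root].
have [y [y0 fy]] := IH (ltnW Hs).
have Hy : iter (2 * r - 1) (@g r) y = 0.
  have Dy : (depth hr y < 2 * r - 1)%N by rewrite -size_f fy.
  rewrite -(subnK Dy); apply: iter_stay; exact: D1.
have [a Ea] := F3 hr Hy.
set x0 : ZZ r * ZZ r := (a, a - y.1).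
set x1 : ZZ r * ZZ r := (a + H r, a + H r - y.1).
have g0E : g x0 = y.
  rewrite /g /= [RHS]surjective_pairing; congr (_, _); first by ring.
  rewrite (_ : a + (a - y.1) = (a + a) - y.1); last by ring.
  rewrite -Ea; ring.
have g1E : g x1 = y.
  rewrite -g0E /g /=; congr (_, _); first by ring.
  rewrite (_ : a + H r + (a + H r - y.1) = a + (a - y.1) + (H r + H r)); last by ring.
  by rewrite HH // addr0.
have gen x : g x = y -> cZ x.1 = b -> exists u, u != 0 /\ f hr u = b :: w.
  move=> gx cx; exists x; split.
    by apply/eqP => x0E; move: y0; rewrite -gx x0E g0 eqxx.
  by rewrite fS ?gx ?cx ?fy.
case Ecb: (cZ a == b).
  exact: (gen x0 g0E (eqP Ecb)).
have Hb : ~~ cZ a = b by move: Ecb; destruct (cZ a), b.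
apply: (gen x1 g1E); by rewrite /= Z5.
Qed.

Theorem theorem5p6 (r : nat) (hr : (1 <= r)%N) :
  is_inverted_PBT (fun x y : nonzero_vertex (2 ^ r) => Delta_arc subadd x y)
    (2 * r - 1)%N /\
  (forall u v : 'Z_(2 ^ r) * 'Z_(2 ^ r),
     Gamma_arc subadd u v <->
       [\/ u != (0, 0) /\ v != (0, 0) /\ Gamma_arc subadd u v,
           u = ((2 ^ (r - 1))%:R, (2 ^ (r - 1))%:R) /\ v = (0, 0)
         | u = (0, 0) /\ v = (0, 0)]).
Proof.
split.
  pose F (x : nonzero_vertex (2 ^ r)) : pbt_node (2 * r - 1) :=
    exist _ (f hr (sval x)) (etrans (f_equal (fun n => n <= 2 * r - 1)%N (size_f hr (sval x))) (D3 hr (sval x))).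
  have Finj : injective F.
    case=> x x0 [y y0] /(congr1 sval) /= E; apply: val_inj => /=.
    exact: (f_inj (erefl _) x0 y0 E).
  have Fsurj : forall s, exists x, F x = s.
    case=> w hw; have [u [u0 fu]] := f_surj hr hw.
    exists (exist _ u u0); apply: val_inj => /=; exact: fu.
  pose x00 : nonzero_vertex (2 ^ r) := exist _ (root r) (rootN0 hr).
  pose G (s : pbt_node (2 * r - 1)) := odflt x00 [pick x | F x == s].
  have FG s : F (G s) = s.
    rewrite /G; case: pickP => [x /eqP //|] /= H0.
    by have [x Ex] := Fsurj s; move: (H0 x); rewrite Ex eqxx.
  exists F; split.
    by exists G => [x|s]; [apply: Finj; rewrite FG | apply: FG].
  case=> x x0 [y y0]; rewrite /Delta_arc /Gamma_arc /pbt_arc /= moveE.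
  split.
    move=> /eqP yE; exists (cZ x.1).
    by rewrite yE (fS hr) // -yE.
  case=> b E.
  have Dx : depth hr x <> 0%N by rewrite -size_f E.
  have gx0 : g x != 0.
    apply/eqP => /(gzero hr) [] xE; first by rewrite xE eqxx in x0.
    by apply: Dx; rewrite xE D5'.
  move: E; rewrite (fS hr gx0) => -[_ E].
  apply/eqP; symmetry; exact: (f_inj (erefl _) gx0 y0 E).
move=> u v; rewrite /Gamma_arc moveE; split.
  move=> /eqP vE.
  case: (eqVneq u (0, 0)) => [u0|u0].
    by constructor 3; split => //; rewrite vE u0 g0.
  case: (eqVneq v (0, 0)) => [v0|v0].
    constructor 2; split => //.
    have [] := gzero hr (etrans (esym vE) v0) => [E|//].
    by rewrite E eqxx in u0.
  by constructor 1; split => //; split => //; rewrite vE.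
case=> [[_ [_ //]]|[-> ->]|[-> ->]].
  by rewrite -/(root r) groot.
by rewrite -[(0,0)]/(0 : ZZ r * ZZ r) g0.
Qed.
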